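(* Let $m$ and $k$ be positive integers with $k\leq m/2$, and let $H$ be $\mathrm{Alt}(m)$ or $\mathrm{Sym}(m)$ in its natural action on the set of $k$-element subsets of $\{1,\ldots,m\}$. If $H$ contains a permutation $g$ that has at most four cycles in this action, then either $k=3$ and $m=6$; or $k=2$ and $m\leq 9$; or $k=1$.
   Context: The number of cycles of a permutation is the number of orbits of the cyclic group it generates, fixed points included. *)

(* Defs.v *)
From mathcomp Require Import all_boot all_fingroup all_solvable.
Set Implicit Arguments. Unset Strict Implicit. Unset Printing Implicit Defensive.

(* The points are 'I_m = {0,...,m-1} (a relabelling of {1,...,m}). *)

Definition ksubsets (m k : nat) : {set {set 'I_m}} := [set A : {set 'I_m} | #|A| == k].

(* Number of cycles of g in its natural action on k-subsets:
   the number of orbits of the cyclic group <[g]> on the k-subsets,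
   fixed points included, for the induced set action 'P^*. *)
Definition ncycles_ksubsets (m k : nat) (g : {perm 'I_m}) : nat :=
  #|[set orbit ('P^*)%act <[g]> A | A in ksubsets m k]|.

(* Main.v *)
Require Import Defs.
From mathcomp Require Import all_boot all_fingroup all_solvable zify.
Set Implicit Arguments. Unset Strict Implicit. Unset Printing Implicit Defensive.

Definition Gb n k :=
  if n < k then 0 else if (k <= 1) || (n.-1 <= k) then 1
  else if (k == 2) || (k == n - 2) then minn 5 n./2
  else if n == 6 then 2 else 5.

Definition term l s k j :=
  if (j <= l) && (k - j <= s) then maxn (Gb l j) (Gb s (k - j)) else 0.

Fixpoint sumt l s k j := match j with 0 => 0 | j'.+1 => sumt l s k j' + term l s k j' end.

Lemma sumtE l s k N : sumt l s k N = \sum_(j < N) term l s k j.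
Proof. elim: N => [|N IH]; first by rewrite big_ord0. by rewrite big_ord_recr /= IH. Qed.

Definition check := all (fun l => all (fun s => all (fun k => Gb (l+s) k <= sumt l s k k.+1)
   (iota 0 (l+s).+1)) (iota 1 19)) (iota 1 19).

Lemma check_ok : check = true. Proof. vm_compute. reflexivity. Qed.

Lemma Gb_pos n j : j <= n -> 1 <= Gb n j.
Proof. rewrite /Gb => h; do ![case: ifP => /= ?]; lia. Qed.

Lemma Gb_le5 n j : Gb n j <= 5.
Proof. rewrite /Gb; do ![case: ifP => /= ?]; lia. Qed.

Lemma Gb_big n j : 10 <= n -> 2 <= j -> j + 2 <= n -> Gb n j = 5.
Proof. rewrite /Gb => *; do ![case: ifP => /= ?]; lia. Qed.

Lemma Gb_edge n k : k <= n -> (k <= 1) || (n.-1 <= k) -> Gb n k = 1.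
Proof. rewrite /Gb => *; do ![case: ifP => /= ?]; lia. Qed.

Lemma term_ge l s k j : j <= k -> j <= l -> k - j <= s -> Gb l j <= term l s k j /\ Gb s (k-j) <= term l s k j.
Proof. move=> *; rewrite /term ifT; [lia|]. lia. Qed.

Lemma sum_ge l s k j : j <= k -> term l s k j <= \sum_(i < k.+1) term l s k i.
Proof.
move=> hj. have hj' : j < k.+1 by [].
rewrite (bigD1 (Ordinal hj')) //=. lia.
Qed.

Lemma numeric l s k : 0 < l -> 0 < s -> Gb (l+s) k <= \sum_(j < k.+1) term l s k j.
Proof.
move=> hl hs.
have [hk|hk] := ltnP (l+s) k.
  by rewrite /Gb hk.
have [small|large] := ltnP (l+s) 20.
  have := check_ok; rewrite /check => /allP /(_ l).
  rewrite mem_iota => /(_ ltac:(lia)) /allP /(_ s); rewrite mem_iota => /(_ ltac:(lia)).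
  move=> /allP /(_ k); rewrite mem_iota => /(_ ltac:(lia)).
  by rewrite sumtE.
have [edge|mid] := boolP ((k <= 1) || ((l+s).-1 <= k)).
  rewrite Gb_edge //.
  apply: (leq_trans _ (@sum_ge l s k (k - s) ltac:(lia))).
  have [h1 _] := term_ge (l:=l) (s:=s) (k:=k) (j:=k-s) ltac:(lia) ltac:(lia) ltac:(lia).
  apply: leq_trans _ h1; apply: Gb_pos; lia.
have h5 := Gb_le5 (l+s) k.
have [bl|bl] := leqP 10 l.
  apply: (leq_trans _ (@sum_ge l s k (maxn 2 (k - s)) ltac:(lia))).
  have [h1 _] := term_ge (l:=l) (s:=s) (k:=k) (j:=maxn 2 (k-s)) ltac:(lia) ltac:(lia) ltac:(lia).
  apply: leq_trans _ h1; rewrite (@Gb_big l) //; lia.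
apply: (leq_trans _ (@sum_ge l s k (k - maxn 2 (k - l)) ltac:(lia))).
have [_ h1] := term_ge (l:=l) (s:=s) (k:=k) (j:=k - maxn 2 (k-l)) ltac:(lia) ltac:(lia) ltac:(lia).
apply: leq_trans _ h1; rewrite (@Gb_big s) //; lia.
Qed.

Lemma bin_step n b : 2 * b.+1 <= n -> 'C(n, b) <= 'C(n, b.+1).
Proof.
move=> h.
have e1 := mul_bin_diag n b. have e2 := mul_bin_down n b.
have : b.+1 * 'C(n, b) <= b.+1 * 'C(n, b.+1).
  rewrite -e1 e2. apply: leq_mul => //. lia.
by rewrite leq_pmul2l.
Qed.

Lemma bin_mono n a b : a <= b -> 2 * b <= n -> 'C(n, a) <= 'C(n, b).
Proof.
move=> hab; elim: b hab => [|b IH] hab hb.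
  by move: hab; rewrite leqn0 => /eqP->.
rewrite leq_eqVlt in hab; case/orP: hab => [/eqP->//|hab].
apply: leq_trans (IH hab _) (bin_step hb); lia.
Qed.

Lemma bin3 l : 'C(l, 3) * 6 = l * (l.-1 * l.-2).
Proof.
have := bin_ffact l 3. rewrite (_ : 3`! = 6) // => ->.
case: l => [|[|[|l]]] //=. rewrite !ffactSS ffactn0 muln1 //.
Qed.

Lemma bin2' l : 'C(l, 2) * 2 = l * l.-1.
Proof.
have := bin_ffact l 2. rewrite (_ : 2`! = 2) // => ->.
case: l => [|[|l]] //=. rewrite !ffactSS ffactn0 muln1 //.
Qed.

Lemma cyc_num l j F : 0 < l -> j <= l -> 1 <= F -> 'C(l, j) <= l * F -> Gb l j <= F.
Proof.
move=> hl hj hF hC.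
rewrite /Gb ltnNge hj /=.
case: ifP => // hedge.
have h2 : forall j', (j' == 2) || (j' == l - 2) -> j' <= l -> 'C(l, j') <= l * F -> minn 5 l./2 <= F.
  move=> j' /orP[/eqP-> | /eqP->] hj' hC'.
  - have : l * l.-1 <= l * (2 * F) by have := bin2' l; nia.
    rewrite leq_pmul2l // => h; lia.
  - have hl2 : 2 <= l by lia.
    move: hC'; rewrite bin_sub // => hC'.
    have : l * l.-1 <= l * (2 * F) by have := bin2' l; nia.
    rewrite leq_pmul2l // => h; lia.
case: ifP => [h|h]; first exact: (h2 j h hj hC).
have h3 : 'C(l, 3) <= 'C(l, j).
  have [hh|hh] := leqP (2 * j) l.
    apply: bin_mono => //; lia.
  rewrite -(bin_sub hj); apply: bin_mono; lia.
have h3' : 'C(l,3) <= l * F := leq_trans h3 hC.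
have : l * (l.-1 * l.-2) <= l * (6 * F) by have := bin3 l; nia.
rewrite leq_pmul2l // => h4.
case: ifP => [/eqP e|e]; first by subst l; lia.
have : 7 <= l by lia.
move=> h7. nia.
Qed.

Section Orb.
Variables (m : nat) (g : {perm 'I_m}).
Local Notation to := ('P^*)%act.
Local Notation Gg := (<[g]>%g).

Definition Ob (S : {set {set 'I_m}}) := [set orbit to Gg A | A in S].

Lemma toE (A : {set 'I_m}) (p : {perm 'I_m}) : to A p = [set p y | y in A].
Proof. by []. Qed.

Definition closed (S : {set {set 'I_m}}) := forall A i, A \in S -> to A (g ^+ i)%g \in S.

Lemma orbit_sub S (A : {set 'I_m}) : closed S -> A \in S -> orbit to Gg A \subset S.
Proof. move=> cS AS; apply/subsetP=> B /orbitP[p /cycleP[i ->] <-]; exact: cS. Qed.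

Lemma Ob_U S1 S2 : closed S1 -> closed S2 -> (forall A, A \in S1 -> A \in S2 -> False) ->
  #|Ob (S1 :|: S2)| = #|Ob S1| + #|Ob S2|.
Proof.
move=> c1 c2 d. rewrite /Ob imsetU cardsU.
suff -> : [set orbit to Gg A | A in S1] :&: [set orbit to Gg A | A in S2] = set0
  by rewrite cards0 subn0.
apply/setP=> O; rewrite !inE; apply/negbTE/negP => /andP[/imsetP[A1 h1 ->] /imsetP[A2 h2 e]].
have : A1 \in orbit to Gg A2 by rewrite -e orbit_refl.
move/(subsetP (orbit_sub c2 h2)) => h. exact: d h1 h.
Qed.

Lemma Ob_classes (S : {set {set 'I_m}}) (phi : {set 'I_m} -> nat) N : closed S ->
  (forall A i, phi (to A (g ^+ i)%g) = phi A) ->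
  \sum_(j < N) #|Ob [set A in S | phi A == j]| <= #|Ob S|.
Proof.
move=> cS hphi.
have cl P : (forall A i, P (to A (g ^+ i)%g) = P A) -> closed [set A in S | P A].
  move=> hP A i; rewrite !inE => /andP[h1 h2]; by rewrite hP h2 cS.
have E : forall N0, #|Ob [set A in S | phi A < N0]| = \sum_(j < N0) #|Ob [set A in S | phi A == j]|.
  elim=> [|n IH].
    rewrite big_ord0; apply/eqP; rewrite cards_eq0; apply/eqP/setP=> O; rewrite !inE.
    by apply/negbTE/imsetP=> -[A]; rewrite inE ltn0 andbF.
  rewrite big_ord_recr /= -IH -Ob_U.
  - congr #|Ob _|; apply/setP=> A; rewrite !inE ltnS leq_eqVlt.
    by case: (phi A == n); case: (phi A < n); case: (A \in S).
  - by apply: cl => A i; rewrite hphi.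
  - by apply: cl => A i; rewrite hphi.
  - move=> A; rewrite !inE => /andP[_ h1] /andP[_ /eqP h2]; by rewrite h2 ltnn in h1.
rewrite -E; apply: subset_leq_card; apply: imsetS; apply/subsetP=> A; rewrite inE => /andP[] //.
Qed.

Lemma Ob_surj (psi : {set 'I_m} -> {set 'I_m}) (S T : {set {set 'I_m}}) :
  (forall A i, psi (to A (g ^+ i)%g) = to (psi A) (g ^+ i)%g) ->
  (forall B, B \in T -> exists2 A, A \in S & psi A = B) -> #|Ob T| <= #|Ob S|.
Proof.
move=> heq sur.
have orbpsi A : orbit to Gg (psi A) = psi @: orbit to Gg A.
  apply/setP=> B; apply/orbitP/imsetP => [[p /cycleP[i ->] <-] | [C /orbitP[p /cycleP[i ->] <-] ->]].
  - exists (to A (g ^+ i)%g); [exact: mem_orbit (mem_cycle _ _) | by rewrite heq].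
  - exists (g ^+ i)%g; [exact: mem_cycle| by rewrite heq].
apply: (@leq_trans #|[set psi @: O | O : {set {set 'I_m}} in Ob S]|); last exact: leq_imset_card.
apply: subset_leq_card; apply/subsetP=> O /imsetP[B hB ->].
have [A hA <-] := sur B hB. apply/imsetP; exists (orbit to Gg A); first exact: imset_f.
exact: orbpsi.
Qed.

Lemma to_exp (A : {set 'I_m}) i : to A (g ^+ i)%g = iter i (fun B => to B g) A.
Proof. elim: i => [|i IH]; first by rewrite expg0 act1. by rewrite expgSr actM IH. Qed.

Lemma Ob_cyc (S : {set {set 'I_m}}) l : 0 < l -> (forall A, A \in S -> to A (g ^+ l)%g = A) -> #|S| <= l * #|Ob S|.
Proof.
move=> hl hfix.
have hO A : A \in S -> #|orbit to Gg A| <= l.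
  move=> hA. have : orbit to Gg A \subset [set to A (g ^+ (val i))%g | i : 'I_l].
    apply/subsetP=> B /orbitP[p /cycleP[i ->] <-].
    apply/imsetP; exists (Ordinal (ltn_pmod i hl)) => //=.
    have hf : iter l (fun B => to B g) A = A by rewrite -to_exp hfix.
    have hq : forall q, iter (q * l) (fun B => to B g) A = A.
      by elim=> [|q IH] //; rewrite mulSn iterD IH.
    by rewrite !to_exp {1}(divn_eq i l) addnC iterD hq.
  move/subset_leq_card => h; apply: leq_trans h _.
  by apply: leq_trans (leq_imset_card _ _) _; rewrite card_ord.
have h1 : S \subset cover (Ob S).
  apply/subsetP=> A hA; apply/bigcupP; exists (orbit to Gg A); first exact: imset_f.
  exact: orbit_refl.
apply: leq_trans (subset_leq_card h1) _.
apply: leq_trans (leq_card_cover _).1 _.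
rewrite mulnC -sum_nat_const; apply: leq_sum => O /imsetP[A hA ->]; exact: hO.
Qed.


Definition Sk (D : {set 'I_m}) k := [set A : {set 'I_m} | A \subset D & #|A| == k].
Definition ginv (D : {set 'I_m}) := forall i y, ((g ^+ i)%g y \in D) = (y \in D).

Lemma ginv_im (E : {set 'I_m}) i : ginv E -> [set (g ^+ i)%g y | y in E] = E.
Proof.
move=> hE; apply/eqP; rewrite eqEcard card_imset; last exact: perm_inj.
rewrite leqnn andbT; apply/subsetP=> _ /imsetP[y hy ->]; by rewrite hE.
Qed.

Lemma toI (A E : {set 'I_m}) i : ginv E -> to (A :&: E) (g ^+ i)%g = to A (g ^+ i)%g :&: E.
Proof.
move=> hE; rewrite !toE imsetI; first by rewrite (ginv_im _ hE).
by move=> x y _ _; apply: perm_inj.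
Qed.

Lemma Sk_ex (D : {set 'I_m}) k : k <= #|D| -> exists A, A \in Sk D k.
Proof.
move=> hk; have : 0 < #|Sk D k| by rewrite cards_draws bin_gt0.
by case/card_gt0P => A hA; exists A.
Qed.

Lemma Ob_pos (D : {set 'I_m}) k : k <= #|D| -> 0 < #|Ob (Sk D k)|.
Proof.
move=> /Sk_ex [A hA]; apply/card_gt0P; exists (orbit to Gg A); exact: imset_f.
Qed.

Lemma Sk_closed (D : {set 'I_m}) k : ginv D -> closed (Sk D k).
Proof.
move=> hD A i; rewrite !inE => /andP[hA hk]; rewrite toE card_imset; last exact: perm_inj.
rewrite hk andbT -(ginv_im i hD); exact: imsetS.
Qed.

Lemma ginv_porbit x : ginv (porbit g x).
Proof. by move=> i y; rewrite -!eq_porbit_mem porbit_perm. Qed.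

Lemma porbit_fix x y : y \in porbit g x -> (g ^+ #|porbit g x|)%g y = y.
Proof.
rewrite -eq_porbit_mem => /eqP <-; by rewrite permX iter_porbit.
Qed.

Lemma cyc_bound x j : Gb #|porbit g x| j <= #|Ob (Sk (porbit g x) j)|.
Proof.
set C := porbit g x; set l := #|C|.
have hl : 0 < l by rewrite lt0n card_porbit_neq0.
have [hj|hj] := leqP j l; last by rewrite /Gb hj.
apply: cyc_num => //; first exact: Ob_pos.
rewrite -cards_draws; apply: Ob_cyc => // A; rewrite inE => /andP[hA _].
rewrite toE; apply/setP=> z; apply/imsetP/idP => [[y hy ->]| hz].
  by rewrite porbit_fix // (subsetP hA).
by exists z; rewrite ?porbit_fix // (subsetP hA).
Qed.

Lemma glue (C D B1 B2 : {set 'I_m}) : C \subset D -> B1 \subset C -> B2 \subset D :\: C ->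
  [/\ (B1 :|: B2) :&: C = B1, (B1 :|: B2) :&: (D :\: C) = B2,
      #|B1 :|: B2| = #|B1| + #|B2| & B1 :|: B2 \subset D].
Proof.
move=> hCD h1 h2.
have m1 y : y \in B1 -> (y \in C) && (y \in D) by move=> hy; rewrite (subsetP h1) // (subsetP hCD) // (subsetP h1).
have m2 y : y \in B2 -> (y \notin C) && (y \in D) by move=> hy; have := subsetP h2 y hy; rewrite inE.
split.
- apply/setP=> y; rewrite !inE; case h: (y \in B1); first by case/andP: (m1 y h) => -> .
  case h': (y \in B2) => //=; by case/andP: (m2 y h') => /negbTE ->.
- apply/setP=> y; rewrite !inE; case h': (y \in B2); first by case/andP: (m2 y h') => -> ->; rewrite orbT.
  rewrite orbF; case h: (y \in B1) => //=; by case/andP: (m1 y h) => ->.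
- rewrite cardsU; suff -> : B1 :&: B2 = set0 by rewrite cards0 subn0.
  apply/setP=> y; rewrite !inE; apply/negbTE/andP=> -[/m1/andP[hc _] /m2/andP[hc' _]].
  by rewrite hc in hc'.
- apply/subsetP=> y; rewrite inE => /orP[/m1/andP[_ ->]|/m2/andP[_ ->]] //.
Qed.

Lemma main n : forall D : {set 'I_m}, #|D| = n -> ginv D -> forall k, Gb n k <= #|Ob (Sk D k)|.
Proof.
elim/ltn_ind: n => n IH D hD hinv k.
case: (set_0Vmem D) => [D0 | [x xD]].
  have n0 : n = 0 by rewrite -hD D0 cards0.
  rewrite n0; case: k => [|k]; last by [].
  by apply: Ob_pos; rewrite D0 cards0.
set C := porbit g x.
have hCD : C \subset D.
  by apply/subsetP=> y /porbitP[i ->]; rewrite hinv.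
have hinvC : ginv C := ginv_porbit x.
set l := #|C|.
have hl : 0 < l by rewrite lt0n card_porbit_neq0.
case: (eqVneq C D) => [eCD | nCD].
  by rewrite -hD -eCD; apply: cyc_bound.
set D' := D :\: C.
have hsum : l + #|D'| = n.
  by rewrite -hD -(cardsID C D) (setIidPr hCD).
have hs : 0 < #|D'|.
  rewrite lt0n; apply/negP => /eqP hs0.
  move/negP: nCD; apply; rewrite eqEcard hCD /= hD -hsum hs0 addn0 leqnn //.
have hinvD' : ginv D' by move=> i y; rewrite !inE hinv hinvC.
have IH' j : Gb #|D'| j <= #|Ob (Sk D' j)| by apply: IH => //; lia.
have cyc' j : Gb l j <= #|Ob (Sk C j)| := cyc_bound x j.
rewrite -hsum.
apply: leq_trans (numeric k hl hs) _.
have phiinv : forall A i, (fun A => #|A :&: C|) (to A (g ^+ i)%g) = (fun A => #|A :&: C|) A.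
  by move=> A i /=; rewrite -toI // toE card_imset //; apply: perm_inj.
have X := Ob_classes (k.+1) (@Sk_closed D k hinv) phiinv.
refine (leq_trans _ X).
apply: leq_sum => j _. rewrite /term; case: ifP => // /andP[hjl hjs].
have hjk : j <= k by have := ltn_ord j.
rewrite geq_max; apply/andP; split.
- apply: leq_trans (cyc' j) _.
  apply: (Ob_surj (psi := fun A => A :&: C)); first by move=> A i; rewrite toI.
  move=> B; rewrite inE => /andP[hB /eqP hBc].
  have [B' hB'] := Sk_ex hjs; move: hB'; rewrite inE => /andP[hB'1 /eqP hB'2].
  have [e1 e2 e3 e4] := glue hCD hB hB'1.
  exists (B :|: B'); last by [].
  by rewrite !inE e4 e3 e1 hBc hB'2 (subnKC hjk) !eqxx.
- apply: leq_trans (IH' _) _.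
  apply: (Ob_surj (psi := fun A => A :&: D')); first by move=> A i; rewrite toI.
  move=> B; rewrite inE => /andP[hB /eqP hBc].
  have [B' hB'] := Sk_ex hjl; move: hB'; rewrite inE => /andP[hB'1 /eqP hB'2].
  have [e1 e2 e3 e4] := glue hCD hB'1 hB.
  exists (B' :|: B); last by [].
  by rewrite !inE e4 e3 e1 hBc hB'2 addnC (subnK hjk) !eqxx.
Qed.

End Orb.

Theorem proposition3p4 (m k : nat) (H : {set {perm 'I_m}}) (g : {perm 'I_m}) :
  0 < m -> 0 < k -> k <= m %/ 2 ->
  (H = Alt 'I_m \/ H = Sym 'I_m) ->
  g \in H -> ncycles_ksubsets k g <= 4 ->
  (k = 3 /\ m = 6) \/ (k = 2 /\ m <= 9) \/ k = 1.
Proof.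
move=> hm hk hk2 _ _ hc.
have eK : ksubsets m k = Sk [set: 'I_m] k by apply/setP => A; rewrite !inE subsetT.
have E : ncycles_ksubsets k g = #|Ob g (Sk [set: 'I_m] k)| by rewrite /ncycles_ksubsets eK.
have hT : #|[set: 'I_m]| = m by rewrite cardsT card_ord.
have hinv : ginv g [set: 'I_m] by move=> i y; rewrite !inE.
have := main hT hinv k; rewrite -E => hG.
have hGb : Gb m k <= 4 by apply: leq_trans hG hc.
have h2k : 2 * k <= m.
  by apply: leq_trans (_ : 2 * (m %/ 2) <= m); [rewrite leq_mul2l hk2 orbT | rewrite mulnC leq_divM].
move: hGb; rewrite /Gb; do ![case: ifP => /= ?]; lia.
Qed.
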